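(* Let $e\colon\mathbb{G}_1\times\mathbb{G}_1\to\mathbb{G}_2$ be a cryptographic pairing between groups of order $p$. Suppose the $(t,\epsilon)$-Computational Diffie-Hellman assumption holds in $\mathbb{G}_1$. Then $e$ is a $(t-O(1),\epsilon)$-one-way pairing.
   Context: A cryptographic pairing is a map $e\colon\mathbb{G}_1\times\mathbb{G}_1\to\mathbb{G}_2$ between cyclic groups of prime order $p$ that is bilinear ($e(x^a,y^b)=e(x,y)^{ab}$) and non-degenerate ($e(g,g)$ generates $\mathbb{G}_2$ whenever $g$ generates $\mathbb{G}_1$). The $(t,\epsilon)$-CDH assumption holds in $\mathbb{G}_1$ if there is no algorithm running in time at most $t$ that on input $(g,g^a,g^b)$ outputs $g^{ab}$ with probability at least $\epsilon$ over all choices of $(g,a,b)$. The pairing $e$ is a $(t,\epsilon)$-one-way pairing if for every algorithm $\mathcal{A}$ that takes as input $g\in\mathbb{G}_1$ and $x\in\mathbb{G}_2$, outputs an element of $\mathbb{G}_1$, and runs in time at most $t$, one has $\Pr[e(g,\mathcal{A}(g,x))=x]<\epsilon$, the probability over $g$ and $x$. *)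

(* Defs.v *)
From HB Require Import structures.
From mathcomp Require Import all_boot all_order all_algebra all_fingroup all_solvable.
Set Implicit Arguments. Unset Strict Implicit. Unset Printing Implicit Defensive.
Import Order.TTheory GRing.Theory Num.Theory.
Local Open Scope ring_scope.

Definition dret (R : realFieldType) (T : finType) (x : T) : {ffun T -> R} :=
  [ffun y => (y == x)%:R].
Definition dbind (R : realFieldType) (T U : finType)
    (d : {ffun T -> R}) (f : T -> {ffun U -> R}) : {ffun U -> R} :=
  [ffun u => \sum_t d t * f t u].
Definition dunif (R : realFieldType) (T : finType) : {ffun T -> R} :=
  [ffun _ => (#|T|%:R)^-1].

Definition pairing_bilinear (gT1 gT2 : finGroupType) (e : gT1 -> gT1 -> gT2) :=
  forall (x y : gT1) (a b : nat), e (x ^+ a)%g (y ^+ b)%g = (e x y ^+ (a * b))%g.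
Definition pairing_nondegenerate (gT1 gT2 : finGroupType) (e : gT1 -> gT1 -> gT2) :=
  forall g : gT1, generator [set: gT1] g -> generator [set: gT2] (e g g).

(** * An abstract model of (probabilistic) computation with running time. *)
Record comp_model (R : realFieldType) (gT1 gT2 : finGroupType) (p : nat)
    (e : gT1 -> gT1 -> gT2) := CompModel {
  alg : finType -> finType -> Type;
  run : forall (I O : finType), alg I O -> I -> {ffun O -> R};
  time : forall (I O : finType), alg I O -> nat;
  unit_cost : nat;
  run_ge0 : forall I O (A : alg I O) i o, 0 <= run A i o;
  run_sum1 : forall I O (A : alg I O) i, \sum_o run A i o = 1;
  comp_ex : forall (I J K : finType) (A : alg I J) (B : alg J K),
    exists C : alg I K, (time C <= time A + time B + unit_cost)%N /\
      forall i, run C i = dbind (run A i) (run B);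
  pair_ex : forall (I J K : finType) (A : alg I J) (B : alg I K),
    exists C : alg I (J * K)%type, (time C <= time A + time B + unit_cost)%N /\
      forall i, run C i =
        dbind (run A i) (fun j => dbind (run B i) (fun k => dret R (j, k)));
  fst_ex : forall (I J : finType), exists C : alg (I * J)%type I,
    (time C <= unit_cost)%N /\ forall x, run C x = dret R x.1;
  snd_ex : forall (I J : finType), exists C : alg (I * J)%type J,
    (time C <= unit_cost)%N /\ forall x, run C x = dret R x.2;
  samp_ex : forall (I : finType), exists C : alg I 'I_p,
    (time C <= unit_cost)%N /\ forall x, run C x = dunif R 'I_p;
  mul1_ex : exists C : alg (gT1 * gT1)%type gT1,
    (time C <= unit_cost)%N /\ forall x, run C x = dret R (x.1 * x.2)%g;
  inv1_ex : exists C : alg gT1 gT1,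
    (time C <= unit_cost)%N /\ forall x, run C x = dret R (x^-1)%g;
  exp1_ex : exists C : alg (gT1 * 'I_p)%type gT1,
    (time C <= unit_cost)%N /\ forall x, run C x = dret R (x.1 ^+ x.2)%g;
  mul2_ex : exists C : alg (gT2 * gT2)%type gT2,
    (time C <= unit_cost)%N /\ forall x, run C x = dret R (x.1 * x.2)%g;
  inv2_ex : exists C : alg gT2 gT2,
    (time C <= unit_cost)%N /\ forall x, run C x = dret R (x^-1)%g;
  pairing_ex : exists C : alg (gT1 * gT1)%type gT2,
    (time C <= unit_cost)%N /\ forall x, run C x = dret R (e x.1 x.2)
}.

Arguments alg {R gT1 gT2 p e}.
Arguments run {R gT1 gT2 p e} _ {I O}.
Arguments time {R gT1 gT2 p e} _ {I O}.
Arguments unit_cost {R gT1 gT2 p e}.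

Section Security.
Variables (R : realFieldType) (gT1 gT2 : finGroupType) (p : nat)
  (e : gT1 -> gT1 -> gT2) (M : comp_model R p e).

Definition gens1 : {set gT1} := [set g : gT1 | generator [set: gT1] g].

Definition cdh_success (A : alg M (gT1 * gT1 * gT1)%type gT1) : R :=
  ((#|gens1| * p ^ 2)%N%:R)^-1 *
  \sum_(g in gens1) \sum_(a < p) \sum_(b < p)
     run M A (g, g ^+ a, g ^+ b)%g (g ^+ (a * b))%g.

Definition CDH_assumption (t : nat) (eps : R) : Prop :=
  forall A : alg M (gT1 * gT1 * gT1)%type gT1, (time M A <= t)%N ->
    cdh_success A < eps.

Definition owp_success (A : alg M (gT1 * gT2)%type gT1) : R :=
  ((#|gens1| * #|gT2|)%N%:R)^-1 *
  \sum_(g in gens1) \sum_(x : gT2) \sum_(y : gT1 | e g y == x) run M A (g, x) y.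

Definition one_way_pairing (t : nat) (eps : R) : Prop :=
  forall A : alg M (gT1 * gT2)%type gT1, (time M A <= t)%N ->
    owp_success A < eps.
End Security.

(* Main.v *)
Require Import Defs.
From HB Require Import structures.
From mathcomp Require Import all_boot all_order all_algebra all_fingroup all_solvable.
From mathcomp Require Import zify ring.
Set Implicit Arguments. Unset Strict Implicit. Unset Printing Implicit Defensive.
Import Order.TTheory GRing.Theory Num.Theory.
Local Open Scope ring_scope.

Section Dist.
Variable R : realFieldType.

Lemma dbind_retl (T U : finType) (x : T) (F : T -> {ffun U -> R}) :
  dbind (dret R x) F = F x.
Proof.
apply/ffunP=> u; rewrite !ffunE (bigD1 x) //= big1 => [|t /negbTE ntx].
  by rewrite ffunE eqxx mul1r addr0.
by rewrite ffunE ntx mul0r.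
Qed.

Lemma eq_dbind (T U : finType) (d : {ffun T -> R}) (F G : T -> {ffun U -> R}) :
  (forall t, F t = G t) -> dbind d F = dbind d G.
Proof. by move=> FG; apply/ffunP=> u; rewrite !ffunE; apply: eq_bigr=> t _; rewrite FG. Qed.

Lemma dbindA (T U V : finType) (d : {ffun T -> R}) (F : T -> {ffun U -> R})
   (G : U -> {ffun V -> R}) :
  dbind (dbind d F) G = dbind d (fun t => dbind (F t) G).
Proof.
apply/ffunP=> v; rewrite !ffunE.
under eq_bigr do rewrite ffunE mulr_suml.
rewrite exchange_big /=; apply: eq_bigr=> t _.
rewrite ffunE mulr_sumr; apply: eq_bigr=> u _; by rewrite mulrA.
Qed.
End Dist.

Section Model.
Variables (R : realFieldType) (gT1 gT2 : finGroupType) (p : nat)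
  (e : gT1 -> gT1 -> gT2) (M : comp_model R p e).
Local Notation uc := (unit_cost M).

Definition det (I O : finType) (f : I -> O) (n : nat) :=
  exists C : alg M I O, (time M C <= n * uc)%N /\ forall i, run M C i = dret R (f i).

Lemma det_comp (I J K : finType) (f : I -> J) (h : J -> K) n m :
  det f n -> det h m -> det (fun i => h (f i)) (n + m + 1).
Proof.
case=> A [tA rA] [B [tB rB]]; have [C [tC rC]] := comp_ex A B.
exists C; split.
  rewrite !mulnDl mul1n; apply: leq_trans tC _; by rewrite leq_add2r leq_add.
by move=> i; rewrite rC rA dbind_retl rB.
Qed.

Lemma det_pair (I J K : finType) (f : I -> J) (h : I -> K) n m :
  det f n -> det h m -> det (fun i => (f i, h i)) (n + m + 1).
Proof.
case=> A [tA rA] [B [tB rB]]; have [C [tC rC]] := pair_ex A B.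
exists C; split.
  rewrite !mulnDl mul1n; apply: leq_trans tC _; by rewrite leq_add2r leq_add.
by move=> i; rewrite rC rA dbind_retl rB dbind_retl.
Qed.

Lemma det1 (I O : finType) (f : I -> O) :
  (exists C : alg M I O, (time M C <= uc)%N /\ forall x, run M C x = dret R (f x)) ->
  det f 1.
Proof. by case=> C [tC rC]; exists C; rewrite mul1n. Qed.

Lemma det_fst (I J : finType) : det (fun x : I * J => x.1) 1.
Proof. exact/det1/fst_ex. Qed.
Lemma det_snd (I J : finType) : det (fun x : I * J => x.2) 1.
Proof. exact/det1/snd_ex. Qed.
Lemma det_mul1 : det (fun x : gT1 * gT1 => (x.1 * x.2)%g) 1.
Proof. exact/det1/mul1_ex. Qed.
Lemma det_inv1 : det (fun x : gT1 => (x^-1)%g) 1.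
Proof. exact/det1/inv1_ex. Qed.
Lemma det_exp1 : det (fun x : gT1 * 'I_p => (x.1 ^+ x.2)%g) 1.
Proof. exact/det1/exp1_ex. Qed.
Lemma det_mul2 : det (fun x : gT2 * gT2 => (x.1 * x.2)%g) 1.
Proof. exact/det1/mul2_ex. Qed.
Lemma det_pairing : det (fun x : gT1 * gT1 => e x.1 x.2) 1.
Proof. exact/det1/pairing_ex. Qed.

Lemma comp_l (I J K : finType) (f : I -> J) n (A : alg M J K) :
  det f n -> exists C : alg M I K, (time M C <= n * uc + time M A + uc)%N /\
     forall i, run M C i = run M A (f i).
Proof.
case=> D [tD rD]; have [C [tC rC]] := comp_ex D A.
exists C; split; first by apply: leq_trans tC _; rewrite !leq_add2r.
by move=> i; rewrite rC rD dbind_retl.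
Qed.

Lemma comp_r (I J K : finType) (h : J -> K) n (A : alg M I J) :
  det h n -> exists C : alg M I K, (time M C <= time M A + n * uc + uc)%N /\
     forall i, run M C i = dbind (run M A i) (fun j => dret R (h j)).
Proof.
case=> D [tD rD]; have [C [tC rC]] := comp_ex A D.
exists C; split; first by apply: leq_trans tC _; rewrite leq_add2r leq_add2l.
by move=> i; rewrite rC; apply: eq_dbind.
Qed.

Lemma pair_r (I J K : finType) (h : I -> K) n (A : alg M I J) :
  det h n -> exists C : alg M I (J * K)%type, (time M C <= time M A + n * uc + uc)%N /\
     forall i, run M C i = dbind (run M A i) (fun j => dret R (j, h i)).
Proof.
case=> D [tD rD]; have [C [tC rC]] := pair_ex A D.
exists C; split; first by apply: leq_trans tC _; rewrite leq_add2r leq_add2l.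
by move=> i; rewrite rC; apply: eq_dbind => j; rewrite rD dbind_retl.
Qed.
End Model.
Lemma sum_periodic (R : realFieldType) (F : nat -> R) (p : nat) :
  (forall n, F (n + p)%N = F n) -> forall c, \sum_(k < p) F (c + k)%N = \sum_(k < p) F k.
Proof.
move=> Fp; elim=> [|c IH]; first by apply: eq_bigr => k _; rewrite add0n.
rewrite -IH; case: p Fp {IH} => [|p] Fp; first by rewrite !big_ord0.
rewrite big_ord_recr big_ord_recl /= addrC; congr (_ + _).
  by rewrite addn0 -(Fp c) addSn -addnS.
by apply: eq_bigr => k _; rewrite /bump /= add1n addSn addnS.
Qed.

Lemma sum_ind_mul (R : realFieldType) (gT : finGroupType) (d : gT -> R) (c y : gT) :
  \sum_j d j * (c == (j * y^-1)%g)%:R = d (c * y)%g.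
Proof.
rewrite (bigD1 (c * y)%g) //= mulgK eqxx mulr1 big1 ?addr0 // => j njc.
case: eqP => [cj|]; last by rewrite mulr0.
by move: njc; rewrite cj mulgKV eqxx.
Qed.

Lemma owp_inner (R : realFieldType) (gT1 gT2 : finGroupType) (p : nat)
   (e : gT1 -> gT1 -> gT2) (h : gT2 -> gT1 -> R) (g : gT1) :
  #|gT1| = p -> pairing_bilinear e -> generator [set: gT1] g ->
  \sum_(x : gT2) \sum_(y : gT1 | e g y == x) h x y =
  \sum_(k < p) h (e g g ^+ k)%g (g ^+ k)%g.
Proof.
move=> cT1 bil gen.
rewrite (exchange_big_dep xpredT) //=.
under eq_bigr => y _ do rewrite (big_pred1 (e g y)) //.
have ord : #[g]%g = p.
  by move: gen => /eqP gen; rewrite /order -gen cardsT.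
have inj : {in [set: 'I_p] &, injective (fun k : 'I_p => (g ^+ k)%g)}.
  move=> i j _ _ /eqP; rewrite eq_expg_mod_order ord !modn_small //.
  by move/eqP/val_inj.
have imT : [set (g ^+ k)%g | k : 'I_p in [set: 'I_p]] = [set: gT1].
  apply/eqP; rewrite eqEcard subsetT card_in_imset // cardsT cT1 cardsT card_ord leqnn //.


have -> : \sum_y h (e g y) y = \sum_(y in [set: gT1]) h (e g y) y.
  by apply: eq_bigl => y; rewrite in_setT.
rewrite -imT big_imset //=.
rewrite (eq_bigl xpredT); last by move=> k; rewrite in_setT.
apply: eq_bigr => k _; congr (h _ _).
by rewrite -{1}(expg1 g) bil mul1n.
Qed.
Theorem propositionC1 :
  exists C : nat,
  forall (R : realFieldType) (gT1 gT2 : finGroupType) (p : nat)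
         (e : gT1 -> gT1 -> gT2),
    prime p -> #|gT1| = p -> #|gT2| = p ->
    pairing_bilinear e -> pairing_nondegenerate e ->
    forall (M : comp_model R p e) (t : nat) (eps : R),
      CDH_assumption M t eps ->
      forall t' : nat, (t' + C * unit_cost M <= t)%N ->
        one_way_pairing M t' eps.
Proof.
exists 200%N => R gT1 gT2 p e pr c1 c2 bil _ M t eps cdh t' ht A tA.
have [A1 [tA1 rA1]] := comp_l A (det_fst M (gT1 * gT2)%type gT1).
have [S3 [tS3 rS3]] := pair_r A1 (det_snd M (gT1 * gT2)%type gT1).
have [S4 [tS4 rS4]] := comp_r S3 (det_comp (det_pair (det_fst M gT1 gT1)
                        (det_comp (det_snd M gT1 gT1) (det_inv1 M))) (det_mul1 M)).
pose I := (gT1 * gT1 * gT1)%type.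
have dg := det_comp (det_fst M I 'I_p) (det_comp (det_fst M (gT1*gT1)%type gT1) (det_fst M gT1 gT1)).
have du := det_comp (det_fst M I 'I_p) (det_comp (det_fst M (gT1*gT1)%type gT1) (det_snd M gT1 gT1)).
have dv := det_comp (det_fst M I 'I_p) (det_snd M (gT1*gT1)%type gT1).
have ds := det_snd M I 'I_p.
have dgs := det_comp (det_pair dg ds) (det_exp1 M).
have dx := det_comp (det_pair (det_comp (det_pair du dv) (det_pairing M))
                              (det_comp (det_pair dg dgs) (det_pairing M))) (det_mul2 M).
have [S5 [tS5 rS5]] := comp_l S4 (det_pair (det_pair dg dx) dgs).
have [D1 [tD1 rD1]] := det_pair (det_fst M (gT1*gT1)%type gT1) (det_snd M (gT1*gT1)%type gT1).
have [S0 [tS0 rS0]] := samp_ex M I.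
have [C1 [tC1 rC1]] := pair_ex D1 S0.
have [B [tB rB]] := comp_ex C1 S5.
have h1 := leq_trans tC1 (leq_add (leq_add tD1 tS0) (leqnn _)).
have hA1 := leq_trans tA1 (leq_add (leq_add (leqnn _) tA) (leqnn _)).
have hS3 := leq_trans tS3 (leq_add (leq_add hA1 (leqnn _)) (leqnn _)).
have hS4 := leq_trans tS4 (leq_add (leq_add hS3 (leqnn _)) (leqnn _)).
have hS5 := leq_trans tS5 (leq_add (leq_add (leqnn _) hS4) (leqnn _)).
have hB := leq_trans tB (leq_add (leq_add h1 hS5) (leqnn _)).
have tBt : (time M B <= t)%N by lia.
clear h1 hA1 hS3 hS4 hS5 hB tA1 tS3 tS4 tS5 tD1 tS0 tC1 tB.
have hB : forall g u v o : gT1, run M B (g, u, v) o =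
  \sum_(k < p) (p%:R)^-1 * \sum_j run M A (g, e u v * e g (g ^+ k))%g j *
       (o == j * (g ^+ k)^-1)%g%:R.
  move=> g u v o; rewrite rB rC1 rD1 dbind_retl rS0 dbindA ffunE.
  apply: eq_bigr => k _; rewrite dbind_retl !ffunE card_ord; congr (_ * _).
  rewrite rS5 rS4 rS3 dbindA ffunE; apply: eq_bigr => j _.
  rewrite rA1 dbind_retl ffunE.
  by [].
have gp : forall x : gT1, (x ^+ p)%g = 1%g.
  by move=> x; rewrite -c1 -cardsT expg_cardG // inE.
have e1 : forall g k, e g (g ^+ k)%g = (e g g ^+ k)%g.
  by move=> g k; rewrite -{1}(expg1 g) bil mul1n.
pose S g := \sum_(k < p) run M A (g, e g g ^+ k)%g (g ^+ k)%g.
have per : forall g c, \sum_(k < p) run M A (g, e g g ^+ (c + k))%g (g ^+ (c + k))%g = S g.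
  move=> g c; rewrite /S; apply: (@sum_periodic R (fun n => run M A (g, e g g ^+ n)%g (g ^+ n)%g) p) => n.
  have gp2 : (e g g ^+ p)%g = 1%g by rewrite -e1 gp -(expg0 g) e1 expg0.
  by rewrite !expgD gp gp2 !mulg1.
have p0 : (p%:R : R) != 0 by rewrite pnatr_eq0 -lt0n prime_gt0.
have key : forall g, \sum_(a < p) \sum_(b < p) run M B (g, g ^+ a, g ^+ b)%g (g ^+ (a * b))%g
                  = p%:R * S g.
  move=> g.
  have -> : \sum_(a < p) \sum_(b < p) run M B (g, g ^+ a, g ^+ b)%g (g ^+ (a * b))%g
        = \sum_(a < p) \sum_(b < p) ((p%:R)^-1 * S g).
    apply: eq_bigr => a _; apply: eq_bigr => b _.
    rewrite hB; under eq_bigr => k _ do rewrite sum_ind_mul bil e1 -!expgD.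
    by rewrite -mulr_sumr per.
  rewrite sumr_const card_ord sumr_const card_ord -mulrnA -[_ *+ (p * p)]mulr_natr natrM.
  by field.
have eq : owp_success A = cdh_success B.
  rewrite /owp_success /cdh_success c2.
  rewrite (eq_bigr S); last first.
    by move=> g; rewrite inE => gen; apply: owp_inner.
  rewrite [in RHS](eq_bigr (fun g => p%:R * S g)); last by move=> g _; apply: key.
  rewrite -mulr_sumr !natrM !invfM -!mulrA; congr (_ * _).
  by rewrite mulKf.
by rewrite eq; apply: cdh.
Qed.
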